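(* Let $D$ be a perfect subgroup of a group $G$, let $\pi\colon S\to G$ be a surjective group homomorphism with central kernel, and let $\tilde D$ be the smallest subgroup of $S$ with $\pi(\tilde D)=D$. Then the sandwich classification theorem holds for $L(D,G)$ if and only if it holds for $L(\tilde D,S)$, and $\pi$ induces a bijection from the set of $\tilde D$-full subgroups of $S$ onto the set of $D$-full subgroups of $G$.
   Context: A group is perfect if it equals its commutator subgroup; $X^Y$ denotes the subgroup generated by all $b^{-1}ab$, $a\in X$, $b\in Y$. $L(D,G)$ is the lattice of subgroups of $G$ containing $D$; $F\in L(D,G)$ is $D$-full if $D^F=F$. A sandwich of $L(D,G)$ is the set of all subgroups $H$ with $F\le H\le N_G(F)$ for a fixed $D$-full subgroup $F$. The lattice $L(D,G)$ satisfies the sandwich classification theorem if it is the union of its sandwiches, i.e. for every $H\in L(D,G)$ the subgroup $D^H$ is $D$-full and $H\le N_G(D^H)$. The smallest subgroup $\tilde D$ with $\pi(\tilde D)=D$ exists (it is contained in every subgroup mapping onto $D$). *)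

(* Defs.v *)
(* the statement concerns arbitrary (possibly infinite) groups,
   so we use an explicit record of groups rather than MathComp finGroupType. *)
Set Implicit Arguments.

Record grp := Grp {
  carrier :> Type;
  gmul : carrier -> carrier -> carrier;
  ginv : carrier -> carrier;
  gone : carrier;
  gmulA : forall x y z, gmul x (gmul y z) = gmul (gmul x y) z;
  gmul1g : forall x, gmul gone x = x;
  gmulVg : forall x, gmul (ginv x) x = gone
}.

Arguments gmul {g} x y.
Arguments ginv {g} x.
Arguments gone {g}.

Definition gset (G : grp) := G -> Prop.

Definition subset {G : grp} (A B : gset G) : Prop := forall x, A x -> B x.
Definition seteq {G : grp} (A B : gset G) : Prop := forall x, A x <-> B x.

Definition subgroup {G : grp} (A : gset G) : Prop :=
  A gone /\ (forall x y, A x -> A y -> A (gmul x y)) /\ (forall x, A x -> A (ginv x)).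

Definition gen {G : grp} (A : gset G) : gset G :=
  fun x => forall H : gset G, subgroup H -> subset A H -> H x.

Definition conjg {G : grp} (a b : G) : G := gmul (gmul (ginv b) a) b.

(* X^Y : subgroup generated by all b^{-1} a b, a in X, b in Y *)
Definition conjgen {G : grp} (X Y : gset G) : gset G :=
  gen (fun z => exists a b, X a /\ Y b /\ z = conjg a b).

Definition commg {G : grp} (a b : G) : G :=
  gmul (gmul (gmul (ginv a) (ginv b)) a) b.

Definition derived {G : grp} (D : gset G) : gset G :=
  gen (fun z => exists a b, D a /\ D b /\ z = commg a b).

Definition perfect {G : grp} (D : gset G) : Prop := subgroup D /\ seteq D (derived D).

Definition normalizer {G : grp} (F : gset G) : gset G :=
  fun g => forall x, F x <-> F (conjg x g).

Definition full {G : grp} (D F : gset G) : Prop :=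
  subgroup F /\ subset D F /\ seteq (conjgen D F) F.

Definition sandwich_classification {G : grp} (D : gset G) : Prop :=
  forall H : gset G, subgroup H -> subset D H ->
    full D (conjgen D H) /\ subset H (normalizer (conjgen D H)).

Definition image {S G : grp} (f : S -> G) (A : gset S) : gset G :=
  fun g => exists s, A s /\ f s = g.

(* Main.v *)
Require Import Defs.
From Stdlib Require Import FunctionalExtensionality PropExtensionality.

Local Infix "**" := gmul (at level 40, left associativity).

Lemma seteq_eq {G : grp} (A B : gset G) : seteq A B -> A = B.
Proof. intro H. apply functional_extensionality; intro x. apply propositional_extensionality; apply H. Qed.

Lemma mulVg {G : grp} (x : G) : ginv x ** x = gone. Proof. apply gmulVg. Qed.
Lemma mul1g {G : grp} (x : G) : gone ** x = x. Proof. apply gmul1g. Qed.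
Lemma mulgA {G : grp} (x y z : G) : x ** (y ** z) = (x ** y) ** z. Proof. apply gmulA. Qed.

Lemma mulgA' {G : grp} (x y z : G) : (x ** y) ** z = x ** (y ** z).
Proof. symmetry; apply gmulA. Qed.

Lemma mulKg {G : grp} (x y : G) : ginv x ** (x ** y) = y.
Proof. rewrite mulgA, mulVg, mul1g; reflexivity. Qed.

Lemma mulgV {G : grp} (x : G) : x ** ginv x = gone.
Proof.
  assert (H : (x ** ginv x) ** (x ** ginv x) = x ** ginv x).
  { rewrite mulgA', (mulgA (ginv x) x), mulVg, mul1g. reflexivity. }
  rewrite <- (mulKg (x ** ginv x) (x ** ginv x)) at 1. rewrite H, mulVg. reflexivity.
Qed.

Lemma mulg1 {G : grp} (x : G) : x ** gone = x.
Proof. rewrite <- (mulVg x), mulgA, mulgV, mul1g; reflexivity. Qed.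

Lemma mulKVg {G : grp} (x y : G) : x ** (ginv x ** y) = y.
Proof. rewrite mulgA, mulgV, mul1g; reflexivity. Qed.

Lemma inv_uniq {G : grp} (a b : G) : a ** b = gone -> ginv a = b.
Proof. intro H. rewrite <- (mulKg a b), H, mulg1. reflexivity. Qed.

Lemma invgK {G : grp} (x : G) : ginv (ginv x) = x.
Proof. apply inv_uniq, mulVg. Qed.

Lemma invMg {G : grp} (x y : G) : ginv (x ** y) = ginv y ** ginv x.
Proof. apply inv_uniq. rewrite mulgA', mulKVg, mulgV. reflexivity. Qed.

Lemma invg1 {G : grp} : ginv (@gone G) = gone.
Proof. apply inv_uniq, mul1g. Qed.

Ltac gsimpl := repeat (rewrite ?mulgA', ?mulKg, ?mulKVg, ?mulVg, ?mulgV, ?mul1g, ?mulg1, ?invMg, ?invgK, ?invg1).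

Lemma hom1 {A B : grp} (f : A -> B) (Hf : forall x y, f (x ** y) = f x ** f y) : f gone = gone.
Proof.
  assert (H : f gone ** f gone = f gone ** gone) by (rewrite <- Hf, mul1g, mulg1; reflexivity).
  rewrite <- (mulKg (f gone) (f gone)), H. gsimpl. reflexivity.
Qed.

Lemma homV {A B : grp} (f : A -> B) (Hf : forall x y, f (x ** y) = f x ** f y) x :
  f (ginv x) = ginv (f x).
Proof. symmetry; apply inv_uniq. rewrite <- Hf, mulgV. apply (hom1 f Hf). Qed.

Lemma gen_sub {G : grp} (X : gset G) : subset X (gen X).
Proof. intros x Hx H _ HXH. apply HXH, Hx. Qed.

Lemma gen_subgroup {G : grp} (X : gset G) : subgroup (gen X).
Proof.
  unfold subgroup, gen. split; [|split].
  - intros H [H1 _] _; exact H1.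
  - intros x y Hx Hy H HH HXH. pose proof HH as [_ [HM _]]. apply HM; [apply Hx|apply Hy]; auto.
  - intros x Hx H HH HXH. pose proof HH as [_ [_ HV]]. apply HV. apply Hx; auto.
Qed.
Lemma gen_min {G : grp} (X H : gset G) : subgroup H -> subset X H -> subset (gen X) H.
Proof. intros HH HXH x Hx. apply Hx; auto. Qed.

Lemma gen_mono {G : grp} (X Y : gset G) : subset X Y -> subset (gen X) (gen Y).
Proof. intros HXY. apply gen_min. apply gen_subgroup. intros x Hx. apply gen_sub, HXY, Hx. Qed.

Lemma image_subgroup {A B : grp} (f : A -> B) (Hf : forall x y, f (x ** y) = f x ** f y)
  (H : gset A) : subgroup H -> subgroup (image f H).
Proof.
  intros [H1 [HM HV]]. unfold subgroup, image. split; [|split].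
  - exists gone. split; auto. apply (hom1 f Hf).
  - intros x y [a [Ha <-]] [b [Hb <-]]. exists (a ** b). split; auto.
  - intros x [a [Ha <-]]. exists (ginv a). split; auto. apply (homV f Hf).
Qed.

Lemma preim_subgroup {A B : grp} (f : A -> B) (Hf : forall x y, f (x ** y) = f x ** f y)
  (H : gset B) : subgroup H -> subgroup (fun a => H (f a)).
Proof.
  intros [H1 [HM HV]]. unfold subgroup. split; [|split].
  - rewrite (hom1 f Hf). exact H1.
  - intros x y Hx Hy. rewrite Hf. auto.
  - intros x Hx. rewrite (homV f Hf). auto.
Qed.

Lemma image_gen_sub {A B : grp} (f : A -> B) (Hf : forall x y, f (x ** y) = f x ** f y)
  (X : gset A) : subset (image f (gen X)) (gen (image f X)).
Proof.
  intros y [x [Hx <-]].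
  apply (Hx (fun a => gen (image f X) (f a))).
  - apply preim_subgroup; auto. apply gen_subgroup.
  - intros a Ha. apply gen_sub. exists a; auto.
Qed.

Lemma image_gen {A B : grp} (f : A -> B) (Hf : forall x y, f (x ** y) = f x ** f y)
  (X : gset A) : image f (gen X) = gen (image f X).
Proof.
  apply seteq_eq; intro y; split.
  - apply image_gen_sub; auto.
  - apply gen_min. apply image_subgroup; auto. apply gen_subgroup.
    intros z [a [Ha <-]]. exists a; split; auto. apply gen_sub; auto.
Qed.

Lemma conjg_hom {G : grp} (b x y : G) : conjg (x ** y) b = conjg x b ** conjg y b.
Proof. unfold conjg. gsimpl. reflexivity. Qed.

Lemma conjgM {G : grp} (a b g : G) : conjg (conjg a b) g = conjg a (b ** g).
Proof. unfold conjg. gsimpl. reflexivity. Qed.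

Lemma conjg1 {G : grp} (a : G) : conjg a gone = a.
Proof. unfold conjg. gsimpl. reflexivity. Qed.

Lemma hom_commg {A B : grp} (f : A -> B) (Hf : forall x y, f (x ** y) = f x ** f y) a b :
  f (commg a b) = commg (f a) (f b).
Proof. unfold commg. rewrite !Hf, !(homV f Hf). reflexivity. Qed.

Lemma hom_conjg {A B : grp} (f : A -> B) (Hf : forall x y, f (x ** y) = f x ** f y) a b :
  f (conjg a b) = conjg (f a) (f b).
Proof. unfold conjg. rewrite !Hf, !(homV f Hf). reflexivity. Qed.

Lemma conj_in {G : grp} (X Y : gset G) g x : subgroup Y -> Y g ->
  conjgen X Y x -> conjgen X Y (conjg x g).
Proof.
  intros [_ [HM _]] Hg Hx.
  apply (gen_mono (image (fun z => conjg z g) (fun z => exists a b, X a /\ Y b /\ z = conjg a b))).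
  - intros z [w [[a [b [Ha [Hb ->]]]] <-]]. exists a, (b ** g). repeat split; auto. apply conjgM.
  - apply image_gen_sub. intros; apply conjg_hom. exists x; split; auto.
Qed.

Lemma normalizer_conjgen {G : grp} (X Y : gset G) : subgroup Y -> subset Y (normalizer (conjgen X Y)).
Proof.
  intros HY g Hg x. split.
  - apply conj_in; auto.
  - intro H. pose proof HY as [_ [_ HV]].
    pose proof (conj_in X Y (ginv g) _ HY (HV _ Hg) H) as H2.
    rewrite conjgM, mulgV, conjg1 in H2. exact H2.
Qed.
Lemma kernel_dec {S G : grp} (pi : S -> G) (pi_hom : forall x y, pi (x ** y) = pi x ** pi y)
  (x y : S) : pi x = pi y -> exists k, pi k = gone /\ x = y ** k.
Proof.
  intro E. exists (ginv y ** x). split.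
  - rewrite pi_hom, (homV pi pi_hom), E. apply mulVg.
  - gsimpl. reflexivity.
Qed.

Lemma conj_central {S G : grp} (pi : S -> G) (pi_hom : forall x y, pi (x ** y) = pi x ** pi y)
  (pi_central : forall k : S, pi k = gone -> forall s : S, gmul k s = gmul s k)
  (a b k : S) : pi k = gone -> conjg a (b ** k) = conjg a b.
Proof.
  intro Hk. assert (Hk' : pi (ginv k) = gone) by (rewrite (homV pi pi_hom), Hk; apply invg1).
  unfold conjg. gsimpl. rewrite (pi_central _ Hk'). gsimpl. reflexivity.
Qed.

Lemma comm_central {S G : grp} (pi : S -> G) (pi_hom : forall x y, pi (x ** y) = pi x ** pi y)
  (pi_central : forall k : S, pi k = gone -> forall s : S, gmul k s = gmul s k)
  (y z k l : S) : pi k = gone -> pi l = gone -> commg (y ** k) (z ** l) = commg y z.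
Proof.
  intros Hk Hl.
  assert (Hk' : pi (ginv k) = gone) by (rewrite (homV pi pi_hom), Hk; apply invg1).
  assert (Hl' : pi (ginv l) = gone) by (rewrite (homV pi pi_hom), Hl; apply invg1).
  unfold commg. gsimpl.
  rewrite (pi_central _ Hk'). gsimpl.
  rewrite (pi_central _ Hl'). gsimpl.
  rewrite (pi_central _ Hl (ginv k ** ginv l)). gsimpl. rewrite (pi_central _ Hk (z ** ginv k)). gsimpl. reflexivity.
Qed.
Lemma claimB {S G : grp} (pi : S -> G) (pi_hom : forall x y, pi (x ** y) = pi x ** pi y)
  (pi_central : forall k : S, pi k = gone -> forall s : S, gmul k s = gmul s k)
  (X Y1 Y2 : gset S) : subset (image pi Y1) (image pi Y2) -> subset (conjgen X Y1) (conjgen X Y2).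
Proof.
  intro HY. apply gen_mono. intros z [a [b [Ha [Hb ->]]]].
  destruct (HY (pi b)) as [b' [Hb' E]]. { exists b; auto. }
  destruct (kernel_dec pi pi_hom b b' (eq_sym E)) as [k [Hk ->]].
  exists a, b'. repeat split; auto. apply (conj_central pi pi_hom pi_central); auto.
Qed.

Lemma claimA {S G : grp} (pi : S -> G) (pi_hom : forall x y, pi (x ** y) = pi x ** pi y)
  (X Y : gset S) : image pi (conjgen X Y) = conjgen (image pi X) (image pi Y).
Proof.
  unfold conjgen. rewrite (image_gen pi pi_hom). f_equal.
  apply seteq_eq. intro z; split.
  - intros [w [[a [b [Ha [Hb ->]]]] <-]]. exists (pi a), (pi b). repeat split.
    exists a; auto. exists b; auto. apply (hom_conjg pi pi_hom).
  - intros [a' [b' [[a [Ha <-]] [[b [Hb <-]] ->]]]]. exists (conjg a b). split.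
    exists a, b; auto. apply (hom_conjg pi pi_hom).
Qed.

Lemma perf_conjgen {S : grp} (X Y : gset S) :
  subset X (derived X) -> subset (conjgen X Y) (derived (conjgen X Y)).
Proof.
  intro HX. apply gen_min. apply gen_subgroup.
  intros z [a [b [Ha [Hb ->]]]].
  apply (gen_mono (image (fun w => conjg w b) (fun z => exists c d, X c /\ X d /\ z = commg c d))).
  - intros z [w [[c [d [Hc [Hd ->]]]] <-]]. exists (conjg c b), (conjg d b).
    repeat split.
    + apply gen_sub. exists c, b; auto.
    + apply gen_sub. exists d, b; auto.
    + apply (hom_commg (fun w => conjg w b)). intros; apply conjg_hom.
  - apply image_gen_sub. intros; apply conjg_hom. exists a; split; auto. apply HX, Ha.
Qed.

Lemma perf_inj {S G : grp} (pi : S -> G) (pi_hom : forall x y, pi (x ** y) = pi x ** pi y)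
  (pi_central : forall k : S, pi k = gone -> forall s : S, gmul k s = gmul s k)
  (X1 X2 : gset S) : subset X1 (derived X1) -> subgroup X2 ->
  subset (image pi X1) (image pi X2) -> subset X1 X2.
Proof.
  intros HX1 HX2 HI x Hx. apply HX1 in Hx. revert x Hx. apply gen_min; auto.
  intros z [a [b [Ha [Hb ->]]]].
  destruct (HI (pi a)) as [a' [Ha' Ea]]. { exists a; auto. }
  destruct (HI (pi b)) as [b' [Hb' Eb]]. { exists b; auto. }
  destruct (kernel_dec pi pi_hom a a' (eq_sym Ea)) as [k [Hk ->]].
  destruct (kernel_dec pi pi_hom b b' (eq_sym Eb)) as [l [Hl ->]].
  rewrite (comm_central pi pi_hom pi_central); auto.
  pose proof HX2 as [_ [HM HV]]. unfold commg. auto.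
Qed.
Theorem lemma2p4 (S G : grp) (pi : S -> G)
  (pi_hom : forall x y : S, pi (gmul x y) = gmul (pi x) (pi y))
  (pi_surj : forall g : G, exists s : S, pi s = g)
  (pi_central : forall k : S, pi k = gone -> forall s : S, gmul k s = gmul s k)
  (D : gset G) (D_sub : subgroup D) (D_perf : perfect D)
  (Dt : gset S) (Dt_sub : subgroup Dt) (Dt_im : seteq (image pi Dt) D)
  (Dt_min : forall H : gset S, subgroup H -> seteq (image pi H) D -> subset Dt H) :
  (sandwich_classification D <-> sandwich_classification Dt) /\
  (forall F : gset S, full Dt F -> full D (image pi F)) /\
  (forall F1 F2 : gset S, full Dt F1 -> full Dt F2 ->
      seteq (image pi F1) (image pi F2) -> seteq F1 F2) /\
  (forall E : gset G, full D E -> exists F : gset S, full Dt F /\ seteq (image pi F) E).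
Proof.
  assert (eD : image pi Dt = D) by (apply seteq_eq; exact Dt_im).
  assert (Dt_perf : subset Dt (derived Dt)).
  { apply Dt_min. apply gen_subgroup. unfold derived. rewrite (image_gen pi pi_hom).
    destruct D_perf as [_ HD]. apply seteq_eq in HD. rewrite HD. unfold derived.
    assert (E : image pi (fun z => exists a b, Dt a /\ Dt b /\ z = commg a b)
                = (fun z => exists a b, D a /\ D b /\ z = commg a b)).
    { apply seteq_eq; intro z; split.
      - intros [w [[a [b [Ha [Hb ->]]]] <-]]. exists (pi a), (pi b). repeat split.
        rewrite <- eD; exists a; auto. rewrite <- eD; exists b; auto.
        apply (hom_commg pi pi_hom).
      - intros [a' [b' [Ha [Hb ->]]]]. rewrite <- eD in Ha, Hb.
        destruct Ha as [a [Ha <-]]. destruct Hb as [b [Hb <-]].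
        exists (commg a b). split. exists a, b; auto. apply (hom_commg pi pi_hom). }
    rewrite E. intro; tauto. }
  assert (imconj : forall Y, image pi (conjgen Dt Y) = conjgen D (image pi Y)).
  { intro Y. rewrite (claimA pi pi_hom), eD. reflexivity. }
  assert (impre : forall E : gset G, image pi (fun s => E (pi s)) = E).
  { intro E. apply seteq_eq; intro g; split.
    - intros [s [Hs <-]]; exact Hs.
    - intro Hg. destruct (pi_surj g) as [s Hs]. exists s. rewrite Hs; auto. }
  assert (Dt_in : forall Y : gset S, Y gone -> subset Dt (conjgen Dt Y)).
  { intros Y HY a Ha. apply gen_sub. exists a, gone. repeat split; auto. symmetry; apply conjg1. }
  assert (part2 : forall F : gset S, full Dt F -> full D (image pi F)).
  { intros F [HF [HDF HFF]]. apply seteq_eq in HFF. split; [|split].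
    - apply image_subgroup; auto.
    - rewrite <- eD. intros g [a [Ha <-]]. exists a; auto.
    - rewrite <- imconj, HFF. intro; tauto. }
  split; [|split; [exact part2|split]].
  - split.
    + intros SC H HH HDH. split; [|apply normalizer_conjgen; auto].
      destruct (SC (image pi H)) as [[_ [_ Hfull]] _].
      { apply image_subgroup; auto. }
      { rewrite <- eD. intros g [a [Ha <-]]. exists a; split; auto. }
      apply seteq_eq in Hfull.
      split; [apply gen_subgroup|split].
      * apply Dt_in. destruct HH; auto.
      * assert (Eim : image pi (conjgen Dt (conjgen Dt H)) = image pi (conjgen Dt H)).
        { rewrite !imconj, Hfull. reflexivity. }
        intro x; split; intro Hx.
        -- eapply (perf_inj pi pi_hom pi_central); [ | apply gen_subgroup | | exact Hx].
           apply perf_conjgen; auto. rewrite Eim; intros ? h; exact h.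
        -- eapply (perf_inj pi pi_hom pi_central); [ | apply gen_subgroup | | exact Hx].
           apply perf_conjgen; auto. rewrite Eim; intros ? h; exact h.
    + intros SC H HH HDH. split; [|apply normalizer_conjgen; auto].
      destruct (SC (fun s => H (pi s))) as [Hfull _].
      { apply preim_subgroup; auto. }
      { intros a Ha. apply HDH. rewrite <- eD. exists a; auto. }
      apply part2 in Hfull. rewrite imconj, impre in Hfull. exact Hfull.
  - intros F1 F2 [_ [_ H1]] [_ [_ H2]] HI. apply seteq_eq in H1, H2, HI.
    rewrite <- H1, <- H2. intro x; split; apply (claimB pi pi_hom pi_central); rewrite HI; intros ? h; exact h.
  - intros E [HE [HDE HEE]]. apply seteq_eq in HEE.
    exists (conjgen Dt (fun s => E (pi s))).
    assert (Eim : image pi (conjgen Dt (fun s => E (pi s))) = E).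
    { rewrite imconj, impre. exact HEE. }
    split; [|rewrite Eim; intro; tauto].
    split; [apply gen_subgroup|split].
    + apply Dt_in. rewrite (hom1 pi pi_hom). destruct HE; auto.
    + intro x; split; apply (claimB pi pi_hom pi_central); rewrite Eim, impre; intros ? h; exact h.
Qed.
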